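(* Let $A\in N_C$ be a concept name and $E,F,G$ regular role expressions, and let $\Sigma_R\subseteq N_R$ be the (finite) set of role names occurring in $E$, $F$, $G$. Writing $\Sigma_R$ also for the regular role expression that is the union of its elements (with $\Sigma_R^*$ its Kleene star), we have: (1) $\forall E.A\sqcap\forall F.\bot\sqsubseteq\forall G.A$ holds if and only if $\mathcal L(G)\subseteq\mathcal L(E+F\Sigma_R^* )$; (2) $\forall F.\bot\sqsubseteq\forall G.\bot$ holds if and only if $\mathcal L(G)\subseteq\mathcal L(F\Sigma_R^* )$. Here a subsumption $X\sqsubseteq Y$ ''holds'' means $X^{\mathcal I}\subseteq Y^{\mathcal I}$ for every interpretation $\mathcal I$.
   Context: Let $N_C$ and $N_R$ be disjoint countably infinite sets of concept names and role names. Regular role expressions are generated by $E ::= \emptyset \mid \varepsilon \mid r \mid (E+E) \mid (EE) \mid E^{*}$ with $r\in N_R$, with languages $\mathcal L(E)\subseteq N_R^*$ defined as usual (the union of an empty set of role names is the expression $\emptyset$). $\mathcal{FL}_{\bot\mathit{reg}}$ concept descriptions are generated by $C ::= A \mid \top \mid \bot \mid (C\sqcap C) \mid \forall E.C$ with $A\in N_C$. An interpretation $\mathcal I=(\Delta^{\mathcal I},\cdot^{\mathcal I})$ has nonempty domain, $A^{\mathcal I}\subseteq\Delta^{\mathcal I}$, $r^{\mathcal I}\subseteq(\Delta^{\mathcal I})^2$; $E^{\mathcal I}$ is the union over words $r_1\cdots r_n\in\mathcal L(E)$ of $r_1^{\mathcal I}\circ\cdots\circ r_n^{\mathcal I}$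 (identity for the empty word); $\top^{\mathcal I}=\Delta^{\mathcal I}$, $\bot^{\mathcal I}=\emptyset$, $(C\sqcap D)^{\mathcal I}=C^{\mathcal I}\cap D^{\mathcal I}$, $(\forall E.C)^{\mathcal I}=\{x\mid y\in C^{\mathcal I}$ for all $y$ with $(x,y)\in E^{\mathcal I}\}$. *)

(* Defs.v *)
From Stdlib Require Import List.
Import ListNotations.

(* Concept names N_C and role names N_R: two disjoint countably infinite
   sets, modelled as two distinct copies of nat. *)
Inductive cname : Type := CN (n : nat).
Inductive rname : Type := RN (n : nat).

Inductive rexp : Type :=
| REmpty : rexp
| REps : rexp
| RRole : rname -> rexp
| RPlus : rexp -> rexp -> rexp
| RCat : rexp -> rexp -> rexp
| RStar : rexp -> rexp.

Fixpoint lang (E : rexp) (w : list rname) : Prop :=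
  match E with
  | REmpty => False
  | REps => w = []
  | RRole r => w = [r]
  | RPlus E1 E2 => lang E1 w \/ lang E2 w
  | RCat E1 E2 => exists u v, w = u ++ v /\ lang E1 u /\ lang E2 v
  | RStar E1 => exists ws : list (list rname), w = concat ws /\ Forall (lang E1) ws
  end.

Inductive concept : Type :=
| CAtom : cname -> concept
| CTop : concept
| CBot : concept
| CAnd : concept -> concept -> concept
| CAll : rexp -> concept -> concept.

Record interp : Type := {
  dom : Type;
  dom_inhabited : inhabited dom;
  iconc : cname -> dom -> Prop;
  irole : rname -> dom -> dom -> Prop
}.

Fixpoint word_rel (I : interp) (w : list rname) (x y : dom I) : Prop :=
  match w with
  | [] => x = y
  | r :: w' => exists z, irole I r x z /\ word_rel I w' z y
  end.

Definition rexp_rel (I : interp) (E : rexp) (x y : dom I) : Prop :=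
  exists w, lang E w /\ word_rel I w x y.

Fixpoint cext (I : interp) (C : concept) (x : dom I) : Prop :=
  match C with
  | CAtom A => iconc I A x
  | CTop => True
  | CBot => False
  | CAnd C1 C2 => cext I C1 x /\ cext I C2 x
  | CAll E C1 => forall y, rexp_rel I E x y -> cext I C1 y
  end.

Definition subsumes (C D : concept) : Prop :=
  forall (I : interp) (x : dom I), cext I C x -> cext I D x.

Definition lang_incl (E F : rexp) : Prop :=
  forall w, lang E w -> lang F w.

Fixpoint roles (E : rexp) : list rname :=
  match E with
  | REmpty | REps => []
  | RRole r => [r]
  | RPlus E1 E2 | RCat E1 E2 => roles E1 ++ roles E2
  | RStar E1 => roles E1
  end.

Definition union_roles (l : list rname) : rexp :=
  fold_right (fun r acc => RPlus (RRole r) acc) REmpty l.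

(* Main.v *)
Require Import Defs.
From Stdlib Require Import List Classical.
Import ListNotations.

Lemma letters_in (G : rexp) : forall w, lang G w -> forall r, In r w -> In r (roles G).
Proof.
  induction G; simpl; intros w H c Hr.
  - contradiction.
  - subst; contradiction.
  - subst; exact Hr.
  - apply in_or_app; destruct H; [left; eauto | right; eauto].
  - destruct H as (u & v & -> & Hu & Hv). apply in_or_app.
    apply in_app_or in Hr; destruct Hr; [left; eauto | right; eauto].
  - destruct H as (ws & -> & Hf). apply in_concat in Hr. destruct Hr as (l & Hl & Hrl).
    rewrite Forall_forall in Hf. eauto.
Qed.

Lemma wr_split I u v : forall (x y : dom I), word_rel I (u ++ v) x y -> exists z, word_rel I u x z.
Proof.
  induction u; simpl; intros x y H.
  - exists x; reflexivity.
  - destruct H as (z & Hz & H). apply IHu in H. destruct H as (z' & H). exists z'. exists z. auto.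
Qed.

Lemma union_in l r : In r l -> lang (union_roles l) [r].
Proof.
  induction l; simpl; intros H; [contradiction|].
  destruct H; [left; subst; reflexivity | right; auto].
Qed.

Lemma star_in l v : (forall r, In r v -> In r l) -> lang (RStar (union_roles l)) v.
Proof.
  intros H. simpl. exists (map (fun r => [r]) v). split.
  - induction v; simpl; [reflexivity|]. f_equal. apply IHv; intros; apply H; simpl; auto.
  - apply Forall_forall. intros x Hx. apply in_map_iff in Hx. destruct Hx as (r & <- & Hr).
    apply union_in. auto.
Qed.

Definition model (w : list rname) (P : list rname -> Prop) : interp :=
  {| dom := list rname; dom_inhabited := inhabits [];
     iconc := fun _ p => P p;
     irole := fun r p q => q = p ++ [r] /\ exists s, w = q ++ s |}.

Lemma wr_fwd w P u : forall (p q : list rname), word_rel (model w P) u p q ->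
  q = p ++ u /\ (u = [] \/ exists s, w = q ++ s).
Proof.
  induction u; simpl; intros p q H.
  - rewrite app_nil_r; auto.
  - destruct H as (z & (-> & Hz) & H). apply IHu in H. destruct H as [-> [->|H]].
    + rewrite !app_nil_r. split; [reflexivity|]. right. exact Hz.
    + split; [rewrite <- app_assoc; reflexivity | right; exact H].
Qed.

Lemma wr0 w P u q : word_rel (model w P) u [] q -> q = u /\ exists s, w = u ++ s.
Proof.
  intros H. apply wr_fwd in H. simpl in H. destruct H as [-> [->|H]].
  - split; [reflexivity| exists w; reflexivity].
  - auto.
Qed.

Lemma wr_bwd w P u : forall (p s : list rname), w = p ++ u ++ s -> word_rel (model w P) u p (p ++ u).
Proof.
  induction u; simpl; intros p s H.
  - rewrite app_nil_r; auto.
  - exists (p ++ [a]). split.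
    + split; [reflexivity|]. exists (u ++ s). subst. rewrite <- app_assoc. reflexivity.
    + replace (p ++ a :: u) with ((p ++ [a]) ++ u) by (rewrite <- app_assoc; reflexivity).
      apply (IHu _ s). subst. rewrite <- app_assoc. reflexivity.
Qed.

Theorem lemma2 (A : cname) (E F G : rexp) :
  let SigmaR := union_roles (roles E ++ roles F ++ roles G) in
  (subsumes (CAnd (CAll E (CAtom A)) (CAll F CBot)) (CAll G (CAtom A))
     <-> lang_incl G (RPlus E (RCat F (RStar SigmaR))))
  /\
  (subsumes (CAll F CBot) (CAll G CBot)
     <-> lang_incl G (RCat F (RStar SigmaR))).
Proof.
  intros SigmaR.
  assert (key : forall w, lang G w ->
    (exists u v, w = u ++ v /\ lang F u /\ lang (RStar SigmaR) v) \/
    (forall u, lang F u -> ~ exists s, w = u ++ s)).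
  { intros w Hw. destruct (classic (exists u s, w = u ++ s /\ lang F u)) as [(u & s & -> & Hu)|Hn].
    - left. exists u, s. repeat split; auto. apply star_in.
      intros r Hr. apply in_or_app; right; apply in_or_app; right.
      eapply letters_in; [exact Hw|]. apply in_or_app; right; exact Hr.
    - right. intros u Hu (s & Hs). apply Hn; eauto. }
  split; split.
  - intros Hs w Hw. destruct (key w Hw) as [H|Hn]; [right; exact H|]. left.
    specialize (Hs (model w (lang E)) []). simpl in Hs.
    apply (Hs); [split|].
    + intros y (u & Hu & Hr). apply wr0 in Hr. destruct Hr as [-> _]. exact Hu.
    + intros y (u & Hu & Hr). apply wr0 in Hr. destruct Hr as [-> Hp]. exact (Hn u Hu Hp).
    + exists w. split; [exact Hw|]. apply (wr_bwd w (lang E) w [] []). rewrite app_nil_r; reflexivity.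
  - intros Hi I x [HE HF] y (w & Hw & Hr). destruct (Hi w Hw) as [H|(u & v & -> & Hu & _)].
    + apply HE. exists w; auto.
    + exfalso. apply wr_split in Hr. destruct Hr as (z & Hz). apply (HF z). exists u. auto.
  - intros Hs w Hw. destruct (key w Hw) as [H|Hn]; [exact H|]. exfalso.
    specialize (Hs (model w (lang E)) []). simpl in Hs.
    apply (Hs) with (y := w).
    + intros y (u & Hu & Hr). apply wr0 in Hr. destruct Hr as [-> Hp]. exact (Hn u Hu Hp).
    + exists w. split; [exact Hw|]. apply (wr_bwd w (lang E) w [] []). rewrite app_nil_r; reflexivity.
  - intros Hi I x HF y (w & Hw & Hr). destruct (Hi w Hw) as (u & v & -> & Hu & _).
    apply wr_split in Hr. destruct Hr as (z & Hz). apply (HF z). exists u. auto.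
Qed.
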